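(* Let $(H,R)$ be a semiquasitriangular Hopf algebra with Drinfeld element $u=S(R^{(2)})R^{(1)}$. Then $u$, $S(u)$ and $uS(u)$ are coinvariant for $\nu$, i.e. $\nu(u)=u\otimes 1$, $\nu(S(u))=S(u)\otimes 1$ and $\nu(uS(u))=uS(u)\otimes 1$.
   Context: All vector spaces are over a field $k$, $\otimes=\otimes_k$. For a Hopf algebra $H$ with comultiplication $\Delta$, counit $\epsilon$, antipode $S$, we use Sweedler notation $\Delta(h)=h_1\otimes h_2$, etc. $\operatorname{Z}(H)$ is the centre of $H$. For $R\in H\otimes H$ we write $R=R^{(1)}\otimes R^{(2)}$ (summation understood); $R'^{(1)}\otimes R'^{(2)}$ denotes another copy of $R$. Definition (semiquasitriangular Hopf algebra): a pair $(H,R)$ with $H$ a Hopf algebra with bijective antipode and $R\in H\otimes H$ invertible such that (1) $R^{(1)}_1\otimes R^{(1)}_2\otimes R^{(2)} = R^{(1)}\otimes R'^{(1)}\otimes R^{(2)}R'^{(2)}$; (2) $R^{(1)}\otimes R^{(2)}_1\otimes R^{(2)}_2 = R^{(1)}R'^{(1)}\otimes R'^{(2)}\otimes R^{(2)}$; (3) $R^{(1)}\otimes R^{(2)}_2R'^{(1)}\otimes R^{(2)}_1R'^{(2)} = R^{(1)}\otimes R'^{(1)}R^{(2)}_1\otimes R'^{(2)}R^{(2)}_2$; (4) $R^{(1)}_2R'^{(1)}\otimes R^{(1)}_1R'^{(2)}\otimes R^{(2)} = R'^{(1)}R^{(1)}_1\otimes R'^{(2)}R^{(1)}_2\otimes R^{(2)}$;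 (5) $\nu(h):=R^{(2)}h_2R'^{(2)}\otimes S(h_1)S(R^{(1)})h_3R'^{(1)}\in H\otimes\operatorname{Z}(H)$ for all $h\in H$; (6) $\nu(h)=R^{(1)}h_2R'^{(1)}\otimes S(R'^{(2)})S(h_1)R^{(2)}h_3$ for all $h\in H$. The map $\nu$ in the claim is the one defined in (5). *)

(* Defs.v *)
(* Hopf algebras over a field k, with elements of H (x) H and
   H (x) H (x) H represented by finite formal sums (sequences of pairs/triples)
   and equality of tensors given by the universal property of the tensor
   product: two formal sums are equal in the tensor product iff every
   (multi)linear map into every k-vector space takes the same value on them. *)
From HB Require Import structures.
From mathcomp Require Import all_boot all_order all_algebra.
Set Implicit Arguments. Unset Strict Implicit. Unset Printing Implicit Defensive.
Import Order.TTheory GRing.Theory Num.Theory.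
Local Open Scope ring_scope.

Section Tensors.
Variables (k : fieldType) (H : lmodType k).

Definition bilin (W : lmodType k) (f : H -> H -> W) : Prop :=
  (forall y a x x', f (a *: x + x') y = a *: f x y + f x' y) /\
  (forall x a y y', f x (a *: y + y') = a *: f x y + f x y').

Definition trilin (W : lmodType k) (f : H -> H -> H -> W) : Prop :=
  (forall y z a x x', f (a *: x + x') y z = a *: f x y z + f x' y z) /\
  (forall x z a y y', f x (a *: y + y') z = a *: f x y z + f x y' z) /\
  (forall x y a z z', f x y (a *: z + z') = a *: f x y z + f x y z').

Definition teq2 (t t' : seq (H * H)) : Prop :=
  forall (W : lmodType k) (f : H -> H -> W), bilin f ->
    \sum_(p <- t) f p.1 p.2 = \sum_(p <- t') f p.1 p.2.

Definition teq3 (t t' : seq (H * H * H)) : Prop :=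
  forall (W : lmodType k) (f : H -> H -> H -> W), trilin f ->
    \sum_(p <- t) f p.1.1 p.1.2 p.2 = \sum_(p <- t') f p.1.1 p.1.2 p.2.

End Tensors.

Section Hopf.
Variables (k : fieldType) (H : algType k).
Variables (D : H -> seq (H * H)) (eps : H -> k) (S : H -> H).

Definition tmul2 (t t' : seq (H * H)) : seq (H * H) :=
  [seq (p.1 * q.1, p.2 * q.2) | p <- t, q <- t'].

(* (Delta (x) id) Delta h  =  h_1 (x) h_2 (x) h_3 *)
Definition D3 (h : H) : seq (H * H * H) :=
  [seq (b.1, b.2, a.2) | a <- D h, b <- D a.1].
Definition D3' (h : H) : seq (H * H * H) :=
  [seq (a.1, b.1, b.2) | a <- D h, b <- D a.2].

Definition is_hopf : Prop :=
  (forall a x y, teq2 (D (a *: x + y))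
                      ([seq (a *: p.1, p.2) | p <- D x] ++ D y)) /\
  (forall x y, teq2 (D (x * y)) (tmul2 (D x) (D y))) /\
  teq2 (D 1) [:: (1, 1)] /\
  (forall h, teq3 (D3 h) (D3' h)) /\
  (forall a x y, eps (a *: x + y) = a * eps x + eps y) /\
  (forall x y, eps (x * y) = eps x * eps y) /\
  eps 1 = 1 /\
  (forall h, \sum_(p <- D h) eps p.1 *: p.2 = h) /\
  (forall h, \sum_(p <- D h) eps p.2 *: p.1 = h) /\
  (forall a x y, S (a *: x + y) = a *: S x + S y) /\
  (forall h, \sum_(p <- D h) S p.1 * p.2 = (eps h)%:A) /\
  (forall h, \sum_(p <- D h) p.1 * S p.2 = (eps h)%:A).

Definition central (z : H) : Prop := forall x : H, x * z = z * x.

Definition in_H_ZH (t : seq (H * H)) : Prop :=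
  exists t' : seq (H * H), teq2 t t' /\ forall p, p \in t' -> central p.2.

Variable R : seq (H * H).

Definition nu (h : H) : seq (H * H) :=
  flatten [seq [seq (r.2 * c.1.2 * s.2, S c.1.1 * S r.1 * c.2 * s.1)
                  | c <- D3 h, s <- R] | r <- R].

Definition semiquasitriangular : Prop :=
  is_hopf /\ bijective S /\
  (exists Ri, teq2 (tmul2 R Ri) [:: (1, 1)] /\ teq2 (tmul2 Ri R) [:: (1, 1)]) /\
  teq3 [seq (b.1, b.2, r.2) | r <- R, b <- D r.1]
       [seq (r.1, s.1, r.2 * s.2) | r <- R, s <- R] /\
  teq3 [seq (r.1, b.1, b.2) | r <- R, b <- D r.2]
       [seq (r.1 * s.1, s.2, r.2) | r <- R, s <- R] /\
  teq3 (flatten [seq [seq (r.1, b.2 * s.1, b.1 * s.2) | b <- D r.2, s <- R] | r <- R])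
       (flatten [seq [seq (r.1, s.1 * b.1, s.2 * b.2) | b <- D r.2, s <- R] | r <- R]) /\
  teq3 (flatten [seq [seq (b.2 * s.1, b.1 * s.2, r.2) | b <- D r.1, s <- R] | r <- R])
       (flatten [seq [seq (s.1 * b.1, s.2 * b.2, r.2) | b <- D r.1, s <- R] | r <- R]) /\
  (forall h, in_H_ZH (nu h)) /\
  (forall h, teq2 (nu h)
     (flatten [seq [seq (r.1 * c.1.2 * s.1, S s.2 * S c.1.1 * r.2 * c.2)
                      | c <- D3 h, s <- R] | r <- R])).

Definition drinfeld_u : H := \sum_(r <- R) S r.2 * r.1.

End Hopf.

(* Main.v *)
Require Import Defs.
From HB Require Import structures.
From mathcomp Require Import all_boot all_order all_algebra.
From Stdlib Require Import FunctionalExtensionality.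
Set Implicit Arguments. Unset Strict Implicit. Unset Printing Implicit Defensive.
Import GRing.Theory.
Local Open Scope ring_scope.

Section Lin.
Variable k : fieldType.

Definition lin (V W : lmodType k) (g : V -> W) :=
  forall a x y, g (a *: x + y) = a *: g x + g y.

Definition quadlin (V W : lmodType k) (f : V -> V -> V -> V -> W) :=
  (forall y z w, lin (fun x => f x y z w)) /\ (forall x z w, lin (fun y => f x y z w)) /\
  (forall x y w, lin (fun z => f x y z w)) /\ (forall x y z, lin (fun w => f x y z w)).

Variables (V U W : lmodType k).
Implicit Types (g : V -> W).

Lemma lin0 g : lin g -> g 0 = 0.
Proof.
move=> hg; have h := hg 1 0 0; rewrite !scale1r !addr0 in h.
by apply: (addrI (g 0)); rewrite addr0 -h.
Qed.

Lemma linZ g a x : lin g -> g (a *: x) = a *: g x.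
Proof. by move=> hg; have := hg a x 0; rewrite addr0 (lin0 hg) addr0. Qed.

Lemma linD g x y : lin g -> g (x + y) = g x + g y.
Proof. by move=> hg; have := hg 1 x y; rewrite !scale1r. Qed.

Lemma lin_sum g (I : Type) (s : seq I) (F : I -> V) :
  lin g -> g (\sum_(i <- s) F i) = \sum_(i <- s) g (F i).
Proof.
move=> hg; elim: s => [|i s IH]; first by rewrite !big_nil lin0.
by rewrite !big_cons linD // IH.
Qed.

Lemma lin_id : lin (fun x : V => x). Proof. by []. Qed.

Lemma lin_comp (g : U -> W) (phi : V -> U) :
  lin g -> lin phi -> lin (fun x => g (phi x)).
Proof. by move=> hg hp a x y; rewrite hp hg. Qed.

Lemma lin_sumF (I : Type) (s : seq I) (F : I -> V -> W) :
  (forall i, lin (F i)) -> lin (fun x => \sum_(i <- s) F i x).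
Proof.
move=> hF a x y; rewrite scaler_sumr -big_split /=.
by apply: eq_bigr => i _; rewrite hF.
Qed.

Lemma lin_scale (c : k) g : lin g -> lin (fun x => c *: g x).
Proof. by move=> hg a x y; rewrite hg scalerDr !scalerA mulrC. Qed.

Lemma bilinP (f : V -> V -> W) :
  (forall y, lin (fun x => f x y)) -> (forall x, lin (fun y => f x y)) -> bilin f.
Proof. by move=> h1 h2; split=> *; [apply: h1|apply: h2]. Qed.

Lemma trilinP (f : V -> V -> V -> W) :
  (forall y z, lin (fun x => f x y z)) -> (forall x z, lin (fun y => f x y z)) ->
  (forall x y, lin (fun z => f x y z)) -> trilin f.
Proof. by move=> h1 h2 h3; split; [|split]=> *; [apply: h1|apply: h2|apply: h3]. Qed.

Lemma quadlinP (f : V -> V -> V -> V -> W) :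
  (forall y z w, lin (fun x => f x y z w)) -> (forall x z w, lin (fun y => f x y z w)) ->
  (forall x y w, lin (fun z => f x y z w)) -> (forall x y z, lin (fun w => f x y z w)) ->
  quadlin f.
Proof. by move=> h1 h2 h3 h4; split; [|split; [|split]]. Qed.

Lemma lin_b1 (f : V -> V -> W) (phi : V -> V) c :
  bilin f -> lin phi -> lin (fun x => f (phi x) c).
Proof. by case=> h1 _ hp a x y; rewrite hp h1. Qed.
Lemma lin_b2 (f : V -> V -> W) (phi : V -> V) c :
  bilin f -> lin phi -> lin (fun x => f c (phi x)).
Proof. by case=> _ h2 hp a x y; rewrite hp h2. Qed.
Lemma lin_t1 (f : V -> V -> V -> W) (phi : V -> V) c d :
  trilin f -> lin phi -> lin (fun x => f (phi x) c d).
Proof. by case=> h1 _ hp a x y; rewrite hp h1. Qed.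
Lemma lin_t2 (f : V -> V -> V -> W) (phi : V -> V) c d :
  trilin f -> lin phi -> lin (fun x => f c (phi x) d).
Proof. by case=> _ [h2 _] hp a x y; rewrite hp h2. Qed.
Lemma lin_t3 (f : V -> V -> V -> W) (phi : V -> V) c d :
  trilin f -> lin phi -> lin (fun x => f c d (phi x)).
Proof. by case=> _ [_ h3] hp a x y; rewrite hp h3. Qed.
Lemma lin_q1 (f : V -> V -> V -> V -> W) (phi : V -> V) c d e :
  quadlin f -> lin phi -> lin (fun x => f (phi x) c d e).
Proof. by case=> h1 _ hp a x y; rewrite hp h1. Qed.
Lemma lin_q2 (f : V -> V -> V -> V -> W) (phi : V -> V) c d e :
  quadlin f -> lin phi -> lin (fun x => f c (phi x) d e).
Proof. by case=> _ [h2 _] hp a x y; rewrite hp h2. Qed.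
Lemma lin_q3 (f : V -> V -> V -> V -> W) (phi : V -> V) c d e :
  quadlin f -> lin phi -> lin (fun x => f c d (phi x) e).
Proof. by case=> _ [_ [h3 _]] hp a x y; rewrite hp h3. Qed.
Lemma lin_q4 (f : V -> V -> V -> V -> W) (phi : V -> V) c d e :
  quadlin f -> lin phi -> lin (fun x => f c d e (phi x)).
Proof. by case=> _ [_ [_ h4]] hp a x y; rewrite hp h4. Qed.

Lemma bil1 (f : V -> V -> W) : bilin f -> forall y, lin (fun x => f x y).
Proof. by case. Qed.
Lemma bil2 (f : V -> V -> W) : bilin f -> forall x, lin (fun y => f x y).
Proof. by case. Qed.
Lemma tri1 (f : V -> V -> V -> W) : trilin f -> forall y z, lin (fun x => f x y z).
Proof. by case. Qed.
Lemma tri2 (f : V -> V -> V -> W) : trilin f -> forall x z, lin (fun y => f x y z).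
Proof. by case=> _ []. Qed.
Lemma tri3 (f : V -> V -> V -> W) : trilin f -> forall x y, lin (fun z => f x y z).
Proof. by case=> _ []. Qed.
End Lin.
Section Hopf.
Variables (k : fieldType) (H : algType k).
Variables (D : H -> seq (H * H)) (eps : H -> k) (S : H -> H) (R : seq (H * H)).

Hypothesis hDl : forall a x y, teq2 (D (a *: x + y))
                      ([seq (a *: p.1, p.2) | p <- D x] ++ D y).
Hypothesis hDm : forall x y, teq2 (D (x * y)) (tmul2 (D x) (D y)).
Hypothesis hD1 : teq2 (D 1) [:: (1, 1)].
Hypothesis hco : forall h, teq3 (D3 D h) (D3' D h).
Hypothesis hel : forall a x y, eps (a *: x + y) = a * eps x + eps y.
Hypothesis hem : forall x y, eps (x * y) = eps x * eps y.
Hypothesis he1 : eps 1 = 1.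
Hypothesis hcu1 : forall h, \sum_(p <- D h) eps p.1 *: p.2 = h.
Hypothesis hcu2 : forall h, \sum_(p <- D h) eps p.2 *: p.1 = h.
Hypothesis hSl : forall a x y, S (a *: x + y) = a *: S x + S y.
Hypothesis hant1 : forall h, \sum_(p <- D h) S p.1 * p.2 = (eps h)%:A.
Hypothesis hant2 : forall h, \sum_(p <- D h) p.1 * S p.2 = (eps h)%:A.

Definition DS (W : lmodType k) (y : H) (F : H -> H -> W) := \sum_(p <- D y) F p.1 p.2.
Definition RS (W : lmodType k) (F : H -> H -> W) := \sum_(p <- R) F p.1 p.2.

Section W.
Variable W : lmodType k.
Implicit Types (F G : H -> H -> W).

Lemma eq_DS y F G : (forall a b, F a b = G a b) -> DS y F = DS y G.
Proof. by move=> e; apply: eq_bigr => p _; rewrite e. Qed.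
Lemma eq_RS F G : (forall a b, F a b = G a b) -> RS F = RS G.
Proof. by move=> e; apply: eq_bigr => p _; rewrite e. Qed.

Lemma DS_lin F : bilin F -> lin (fun y => DS y F).
Proof.
move=> hF a x y; rewrite /DS (hDl a x y hF) big_cat big_map /= scaler_sumr.
by congr (_ + _); apply: eq_bigr => p _; rewrite (linZ _ _ (bil1 hF _)).
Qed.

Lemma lin_DSa F (phi : H -> H) : bilin F -> lin phi -> lin (fun x => DS (phi x) F).
Proof. by move=> hF hp a x y; rewrite hp DS_lin. Qed.

Lemma lin_DSb y (F : H -> H -> H -> W) :
  (forall a b, lin (fun x => F a b x)) -> lin (fun x => DS y (fun a b => F a b x)).
Proof. by move=> hF; apply: lin_sumF => p; apply: hF. Qed.

Lemma lin_RS (F : H -> H -> H -> W) :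
  (forall a b, lin (fun x => F a b x)) -> lin (fun x => RS (fun a b => F a b x)).
Proof. by move=> hF; apply: lin_sumF => p; apply: hF. Qed.

Lemma DS_scale y c F : DS y (fun a b => c *: F a b) = c *: DS y F.
Proof. by rewrite /DS scaler_sumr. Qed.
Lemma RS_scale c F : RS (fun a b => c *: F a b) = c *: RS F.
Proof. by rewrite /RS scaler_sumr. Qed.
Lemma DS_add y F G : DS y (fun a b => F a b + G a b) = DS y F + DS y G.
Proof. by rewrite /DS big_split. Qed.

Lemma DS_RS y (F : H -> H -> H -> H -> W) :
  DS y (fun a b => RS (fun c d => F a b c d)) = RS (fun c d => DS y (fun a b => F a b c d)).
Proof. by rewrite /DS /RS exchange_big. Qed.
Lemma RS_RS (F : H -> H -> H -> H -> W) :
  RS (fun a b => RS (fun c d => F a b c d)) = RS (fun c d => RS (fun a b => F a b c d)).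
Proof. by rewrite /RS exchange_big. Qed.
Lemma DS_DS y z (F : H -> H -> H -> H -> W) :
  DS y (fun a b => DS z (fun c d => F a b c d)) = DS z (fun c d => DS y (fun a b => F a b c d)).
Proof. by rewrite /DS exchange_big. Qed.
End W.

Lemma lin_epsc (W : lmodType k) (phi : H -> H) (c : W) : lin phi -> lin (fun x => eps (phi x) *: c).
Proof. by move=> hp a x y; rewrite hp hel scalerDl scalerA. Qed.

Lemma lin_S (phi : H -> H) : lin phi -> lin (fun x => S (phi x)).
Proof. by move=> hp a x y; rewrite hp hSl. Qed.
Lemma lin_mr (phi : H -> H) c : lin phi -> lin (fun x => phi x * c).
Proof. by move=> hp a x y; rewrite hp mulrDl scalerAl. Qed.
Lemma lin_ml (phi : H -> H) c : lin phi -> lin (fun x => c * phi x).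
Proof. by move=> hp a x y; rewrite hp mulrDr scalerAr. Qed.

Ltac lin_step := match goal with
 | |- bilin _ => apply: bilinP => ? /=
 | |- trilin _ => apply: trilinP => ? ? /=
 | |- quadlin _ => apply: quadlinP => ? ? ? /=
 | |- lin (fun _ => RS _) => apply: lin_RS => ? ? /=
 | |- lin (fun _ => DS _ _) => first [apply: lin_DSb => ? ? /= | apply: lin_DSa]
 | |- lin (fun _ => \sum_(_ <- _) _) => apply: lin_sumF => ? /=
 | |- lin (fun x => x) => exact: lin_id
 | |- lin S => change (lin (fun x => S x)); apply: lin_S; exact: lin_id
 | |- lin ( *:%R ?c) => change (lin (fun x : H => c *: x)); apply: lin_scale; exact: lin_id
 | |- lin ( *%R ?c) => change (lin (fun x => c * x)); apply: lin_ml; exact: lin_id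
 | hf : bilin ?f |- lin (?f ?a) => change (lin (fun x => f a x)); apply: (lin_b2 _ hf); exact: lin_id
 | hf : trilin ?f |- lin (?f ?a ?b) => change (lin (fun x => f a b x)); apply: (lin_t3 _ _ hf); exact: lin_id
 | hf : quadlin ?f |- lin (?f ?a ?b ?c) => change (lin (fun x => f a b c x)); apply: (lin_q4 _ _ _ hf); exact: lin_id
 | |- lin (fun _ => S _) => apply: lin_S
 | |- lin (fun _ => _ * _) => first [apply: lin_mr | apply: lin_ml]
 | |- lin (fun _ => eps _ *: _) => apply: lin_epsc
 | |- lin (fun _ => _ *: _) => apply: lin_scale
 | hf : bilin ?f |- lin (fun _ => ?f _ _) => first [apply: (lin_b1 _ hf) | apply: (lin_b2 _ hf)]
 | hf : trilin ?f |- lin (fun _ => ?f _ _ _) =>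
     first [apply: (lin_t1 _ _ hf) | apply: (lin_t2 _ _ hf) | apply: (lin_t3 _ _ hf)]
 | hf : quadlin ?f |- lin (fun _ => ?f _ _ _ _) =>
     first [apply: (lin_q1 _ _ _ hf) | apply: (lin_q2 _ _ _ hf) | apply: (lin_q3 _ _ _ hf)
           | apply: (lin_q4 _ _ _ hf)]
 end.
Ltac lin_tac := repeat lin_step.

Section Test.
Variable W : lmodType k.
Variable f : H -> H -> W.
Hypothesis hf : bilin f.
Goal forall c, bilin (fun x y => RS (fun a b => DS (x * a) (fun u v => f (S u * b) (v * y * c)))).
Proof. move=> c. lin_tac. Qed.
End Test.

Section W2.
Variable W : lmodType k.
Implicit Types (F G : H -> H -> W).

Lemma DS_mul x y F : bilin F ->
  DS (x * y) F = DS x (fun a1 a2 => DS y (fun b1 b2 => F (a1 * b1) (a2 * b2))).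
Proof. by move=> hF; rewrite /DS (hDm x y hF) /tmul2 big_allpairs_dep. Qed.

Lemma DS_one F : bilin F -> DS 1 F = F 1 1.
Proof. by move=> hF; rewrite /DS (hD1 hF) big_seq1. Qed.

Lemma DS_co h (G : H -> H -> H -> W) : trilin G ->
  DS h (fun a1 a2 => DS a1 (fun b1 b2 => G b1 b2 a2)) =
  DS h (fun a1 a2 => DS a2 (fun b1 b2 => G a1 b1 b2)).
Proof. by move=> hG; have := hco h hG; rewrite /D3 /D3' !big_allpairs_dep. Qed.

Lemma DS_cu1 h (g : H -> W) : lin g -> DS h (fun a b => eps a *: g b) = g h.
Proof.
move=> hg; rewrite -{2}(hcu1 h) lin_sum //; apply: eq_bigr => p _.
by rewrite linZ.
Qed.
Lemma DS_cu2 h (g : H -> W) : lin g -> DS h (fun a b => eps b *: g a) = g h.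
Proof.
move=> hg; rewrite -{2}(hcu2 h) lin_sum //; apply: eq_bigr => p _.
by rewrite linZ.
Qed.
Lemma DS_ant1 h (g : H -> W) : lin g -> DS h (fun a b => g (S a * b)) = eps h *: g 1.
Proof. by move=> hg; rewrite /DS -lin_sum // hant1 linZ. Qed.
Lemma DS_ant2 h (g : H -> W) : lin g -> DS h (fun a b => g (a * S b)) = eps h *: g 1.
Proof. by move=> hg; rewrite /DS -lin_sum // hant2 linZ. Qed.
End W2.

Lemma S1 : S 1 = 1.
Proof.
have hb : bilin (fun a b : H => S a * b) by lin_tac.
have := DS_one hb; rewrite /DS hant1 he1 scale1r mulr1 => <-. done.
Qed.
Lemma Smul x y : S (x * y) = S y * S x.
Proof.
have e1 : S (x * y) = DS x (fun a1 a2 => eps a1 *: DS y (fun b1 b2 => eps b1 *: S (a2 * b2))).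
  rewrite -[in LHS](DS_cu1 x (g := fun z => S (z * y))); last by lin_tac.
  apply: eq_DS => a1 a2 /=; congr (_ *: _).
  by rewrite -[in LHS](DS_cu1 y (g := fun z => S (a2 * z))) //; lin_tac.
have e2 : forall a1 a2, eps a1 *: DS y (fun b1 b2 => eps b1 *: S (a2 * b2)) =
   DS a1 (fun c1 c2 => DS y (fun b1 b2 => DS b1 (fun d1 d2 =>
        S d1 * (S c1 * c2) * d2 * S (a2 * b2)))).
  move=> a1 a2.
  rewrite (DS_ant1 a1 (g := fun z => DS y (fun b1 b2 => DS b1 (fun d1 d2 =>
        S d1 * z * d2 * S (a2 * b2))))); last by lin_tac.
  congr (_ *: _); apply: eq_DS => b1 b2.
  under [RHS]eq_DS => d1 d2 do rewrite mulr1.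
  rewrite (DS_ant1 b1 (g := fun w => w * S (a2 * b2))); last by lin_tac.
  by rewrite mul1r.
rewrite e1; under eq_DS => a1 a2 do rewrite e2.
rewrite DS_co; last by lin_tac.
under eq_DS => a1 a2 do rewrite DS_DS.
under eq_DS => a1 a2 do under eq_DS => b1 b2 do rewrite DS_DS.
under eq_DS => a1 a2 do (rewrite DS_co; last by lin_tac).
have e3 : forall P a2 b2, DS a2 (fun c1 c2 => DS b2 (fun d1 d2 => P * (c1 * d1 * S (c2 * d2)))) =
    (eps a2 * eps b2) *: P.
  move=> P a2 b2.
  rewrite -(DS_mul a2 b2 (F := fun e1 e2 => P * (e1 * S e2))); last by lin_tac.
  by rewrite (DS_ant2 _ (g := fun z => P * z)) ?hem ?mulr1 //; lin_tac.
under eq_DS => a1 a2 do under eq_DS => b1 b2 do rewrite DS_DS.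
under eq_DS => a1 a2 do under eq_DS => b1 b2 do
  (under eq_DS => c1 c2 do under eq_DS => d1 d2 do rewrite -!mulrA mulrA [c1 * _]mulrA; rewrite e3).
under eq_DS => a1 a2 do (under eq_DS => b1 b2 do rewrite -scalerA;
   rewrite DS_scale (DS_cu2 y (g := fun z => S z * S a1)); last by lin_tac).
by rewrite (DS_cu2 x (g := fun z => S y * S z)) //; lin_tac.
Qed.

Section W3.
Variable W : lmodType k.

Lemma epsI z (G : H -> H -> W) : bilin G ->
  eps z *: G 1 1 = DS z (fun z1 z2 => DS z2 (fun w1 w2 => DS w2 (fun v1 v2 =>
                      G (z1 * S v2) (w1 * S v1)))).
Proof.
move=> hG.
under eq_DS => z1 z2 do (rewrite -DS_co; last by lin_tac).
under eq_DS => z1 z2 do under eq_DS => w1 w2 do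
  (rewrite (DS_ant2 w1 (g := fun t => G (z1 * S w2) t)); last by lin_tac).
under eq_DS => z1 z2 do (rewrite (DS_cu1 z2 (g := fun t => G (z1 * S t) 1)); last by lin_tac).
by rewrite (DS_ant2 z (g := fun t => G t 1)) //; lin_tac.
Qed.

Lemma epsI' z c1 c2 (F : H -> H -> W) : bilin F ->
  eps z *: F c1 c2 = DS z (fun z1 z2 => DS z2 (fun w1 w2 => DS w2 (fun v1 v2 =>
                      F (c1 * z1 * S v2) (c2 * w1 * S v1)))).
Proof.
move=> hF; rewrite -[c1]mulr1 -[c2]mulr1.
rewrite (epsI z (G := fun p q => F (c1 * p) (c2 * q))); last by lin_tac.
by rewrite !mulr1; do 3 (apply: eq_DS => ? ? /=); rewrite !mulrA.
Qed.

Lemma DS_S x (F : H -> H -> W) : bilin F ->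
  DS (S x) F = DS x (fun a b => F (S b) (S a)).
Proof.
move=> hF.
rewrite -[LHS](DS_cu2 x (g := fun t => DS (S t) F)); last by lin_tac.
under eq_DS => a1 a2 do rewrite -DS_scale.
under eq_DS => a1 a2 do under eq_DS => e1 e2 do (rewrite epsI'; last by []).
under eq_DS => a1 a2 do under eq_DS => e1 e2 do (rewrite -DS_co; last by lin_tac).
under eq_DS => a1 a2 do rewrite DS_DS.
under eq_DS => a1 a2 do under eq_DS => z1 z2 do
  (rewrite -(DS_mul (S a1) z1 (F := fun m1 m2 => DS z2 (fun v1 v2 => F (m1 * S v2) (m2 * S v1))));
   last by lin_tac).
rewrite -DS_co; last by lin_tac.
under eq_DS => a1 a2 do
  (rewrite (DS_ant1 a1 (g := fun t => DS t (fun m1 m2 => DS a2 (fun v1 v2 => F (m1 * S v2) (m2 * S v1)))));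
   last by lin_tac).
under eq_DS => a1 a2 do (rewrite DS_one; last by lin_tac).
rewrite (DS_cu1 x (g := fun t => DS t (fun v1 v2 => F (1 * S v2) (1 * S v1)))); last by lin_tac.
by apply: eq_DS => ? ?; rewrite !mul1r.
Qed.
End W3.

Lemma lin_eps (c : H) : lin (fun t => eps t *: c).
Proof. by move=> a x y; rewrite hel scalerDl scalerA. Qed.

Lemma RS_in (W : lmodType k) (g : H -> W) (F : H -> H -> H) :
  lin g -> RS (fun a b => g (F a b)) = g (RS F).
Proof. by move=> hg; rewrite /RS lin_sum. Qed.
Lemma DS_in (W : lmodType k) y (g : H -> W) (F : H -> H -> H) :
  lin g -> DS y (fun a b => g (F a b)) = g (DS y F).
Proof. by move=> hg; rewrite /DS lin_sum. Qed.

Hypothesis hRinv : exists Ri, teq2 (tmul2 R Ri) [:: (1, 1)] /\ teq2 (tmul2 Ri R) [:: (1, 1)].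
Hypothesis h1 : teq3 [seq (b.1, b.2, r.2) | r <- R, b <- D r.1]
       [seq (r.1, s.1, r.2 * s.2) | r <- R, s <- R].
Hypothesis h2 : teq3 [seq (r.1, b.1, b.2) | r <- R, b <- D r.2]
       [seq (r.1 * s.1, s.2, r.2) | r <- R, s <- R].
Hypothesis h3 :
  teq3 (flatten [seq [seq (r.1, b.2 * s.1, b.1 * s.2) | b <- D r.2, s <- R] | r <- R])
       (flatten [seq [seq (r.1, s.1 * b.1, s.2 * b.2) | b <- D r.2, s <- R] | r <- R]).
Hypothesis h4 :
  teq3 (flatten [seq [seq (b.2 * s.1, b.1 * s.2, r.2) | b <- D r.1, s <- R] | r <- R])
       (flatten [seq [seq (s.1 * b.1, s.2 * b.2, r.2) | b <- D r.1, s <- R] | r <- R]).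
Hypothesis h5 : forall h, in_H_ZH (nu D S R h).

Section W4.
Variable W : lmodType k.
Implicit Types (G : H -> H -> H -> W) (f : H -> H -> W).

Lemma R1 G : trilin G ->
  RS (fun r1 r2 => DS r1 (fun b1 b2 => G b1 b2 r2)) =
  RS (fun r1 r2 => RS (fun s1 s2 => G r1 s1 (r2 * s2))).
Proof. by move=> hG; have := h1 hG; rewrite !big_allpairs_dep. Qed.
Lemma R2 G : trilin G ->
  RS (fun r1 r2 => DS r2 (fun b1 b2 => G r1 b1 b2)) =
  RS (fun r1 r2 => RS (fun s1 s2 => G (r1 * s1) s2 r2)).
Proof. by move=> hG; have := h2 hG; rewrite !big_allpairs_dep. Qed.
Lemma R3 G : trilin G ->
  RS (fun r1 r2 => DS r2 (fun b1 b2 => RS (fun s1 s2 => G r1 (b2 * s1) (b1 * s2)))) =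
  RS (fun r1 r2 => DS r2 (fun b1 b2 => RS (fun s1 s2 => G r1 (s1 * b1) (s2 * b2)))).
Proof.
move=> hG; have := h3 hG; rewrite !big_flatten !big_map /=.
by under eq_bigr => ? _ do rewrite big_allpairs_dep; under [RHS]eq_bigr => ? _ do rewrite big_allpairs_dep.
Qed.
Lemma R4 G : trilin G ->
  RS (fun r1 r2 => DS r1 (fun b1 b2 => RS (fun s1 s2 => G (b2 * s1) (b1 * s2) r2))) =
  RS (fun r1 r2 => DS r1 (fun b1 b2 => RS (fun s1 s2 => G (s1 * b1) (s2 * b2) r2))).
Proof.
move=> hG; have := h4 hG; rewrite !big_flatten !big_map /=.
by under eq_bigr => ? _ do rewrite big_allpairs_dep; under [RHS]eq_bigr => ? _ do rewrite big_allpairs_dep.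
Qed.
End W4.

Lemma E_gen (e : H) (Ri : seq (H * H)) :
  e = e * e -> e * \sum_(q <- Ri) eps q.1 *: q.2 = 1 -> e = 1.
Proof. by move=> ee ei; rewrite -ei {2}ee -mulrA ei mulr1. Qed.

Lemma E1 : RS (fun a b => eps a *: b) = 1.
Proof.
have ee : RS (fun a b => eps a *: b) = RS (fun a b => eps a *: b) * RS (fun a b => eps a *: b).
  transitivity (RS (fun r1 r2 => DS r1 (fun b1 b2 => eps b1 *: (eps b2 *: r2)))).
    by apply: eq_RS => r1 r2; rewrite (DS_cu1 r1 (g := fun t => eps t *: r2)) //; lin_tac.
  rewrite (R1 (G := fun x y z => eps x *: (eps y *: z))) /=; last by lin_tac.
    rewrite /RS mulr_suml; apply: eq_bigr => r _; rewrite mulr_sumr.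
    by apply: eq_bigr => s _; rewrite -scalerAl -scalerAr.
case: hRinv => Ri [hA _].
apply: (E_gen (Ri := Ri)) => //.
have hb : bilin (fun a b : H => eps a *: b) by lin_tac.
have := hA _ _ hb; rewrite big_seq1 he1 scale1r /tmul2 big_allpairs_dep /= => <-.
rewrite /RS mulr_suml; apply: eq_bigr => r _; rewrite mulr_sumr.
by apply: eq_bigr => s _; rewrite hem -scalerA -scalerAl -scalerAr.
Qed.

Lemma E2 : RS (fun a b => eps b *: a) = 1.
Proof.
have ee : RS (fun a b => eps b *: a) = RS (fun a b => eps b *: a) * RS (fun a b => eps b *: a).
  transitivity (RS (fun r1 r2 => DS r2 (fun b1 b2 => eps b1 *: (eps b2 *: r1)))).
    by apply: eq_RS => r1 r2; rewrite (DS_cu1 r2 (g := fun t => eps t *: r1)) //; lin_tac.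
  rewrite (R2 (G := fun x y z => eps y *: (eps z *: x))) /=; last by lin_tac.
    rewrite /RS mulr_suml; apply: eq_bigr => r _; rewrite mulr_sumr.
    apply: eq_bigr => s _; rewrite -scalerAl -scalerAr !scalerA.
    by congr (_ *: _); rewrite mulrC.
case: hRinv => Ri [hA _].
apply: (E_gen (Ri := [seq (q.2, q.1) | q <- Ri])) => //.
have hb : bilin (fun a b : H => eps b *: a) by lin_tac.
have := hA _ _ hb; rewrite big_seq1 he1 scale1r /tmul2 big_allpairs_dep /= => <-.
rewrite big_map /RS mulr_suml; apply: eq_bigr => r _; rewrite mulr_sumr.
by apply: eq_bigr => s _; rewrite hem -scalerA -scalerAl -scalerAr.
Qed.

Section W5.
Variable W : lmodType k.
Implicit Types (f : H -> H -> W).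

Lemma L1 f : bilin f -> RS (fun r1 r2 => RS (fun s1 s2 => f (S r1 * s1) (r2 * s2))) = f 1 1.
Proof.
move=> hf.
rewrite -(R1 (G := fun x y z => f (S x * y) z)) /=; last by lin_tac.
under eq_RS => r1 r2 do (rewrite (DS_ant1 r1 (g := fun t => f t r2)); last by lin_tac).
under eq_RS => r1 r2 do rewrite -(linZ _ _ (bil2 hf 1)).
by rewrite (RS_in (g := f 1)) ?E1 //; lin_tac.
Qed.
Lemma L1' f : bilin f -> RS (fun r1 r2 => RS (fun s1 s2 => f (r1 * S s1) (r2 * s2))) = f 1 1.
Proof.
move=> hf.
rewrite -(R1 (G := fun x y z => f (x * S y) z)) /=; last by lin_tac.
under eq_RS => r1 r2 do (rewrite (DS_ant2 r1 (g := fun t => f t r2)); last by lin_tac).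
under eq_RS => r1 r2 do rewrite -(linZ _ _ (bil2 hf 1)).
by rewrite (RS_in (g := f 1)) ?E1 //; lin_tac.
Qed.
Lemma L2 f : bilin f -> RS (fun r1 r2 => RS (fun s1 s2 => f (r1 * s1) (S s2 * r2))) = f 1 1.
Proof.
move=> hf.
rewrite -(R2 (G := fun x y z => f x (S y * z))) /=; last by lin_tac.
under eq_RS => r1 r2 do (rewrite (DS_ant1 r2 (g := fun t => f r1 t)); last by lin_tac).
under eq_RS => r1 r2 do rewrite -(linZ _ _ (bil1 hf 1)).
by rewrite (RS_in (g := fun t => f t 1)) ?E2 //; lin_tac.
Qed.
Lemma L2' f : bilin f -> RS (fun r1 r2 => RS (fun s1 s2 => f (r1 * s1) (s2 * S r2))) = f 1 1.
Proof.
move=> hf.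
rewrite -(R2 (G := fun x y z => f x (y * S z))) /=; last by lin_tac.
under eq_RS => r1 r2 do (rewrite (DS_ant2 r2 (g := fun t => f r1 t)); last by lin_tac).
under eq_RS => r1 r2 do rewrite -(linZ _ _ (bil1 hf 1)).
by rewrite (RS_in (g := fun t => f t 1)) ?E2 //; lin_tac.
Qed.
End W5.

Lemma SSR (W : lmodType k) (f : H -> H -> W) : bilin f -> RS (fun a b => f (S a) (S b)) = RS f.
Proof.
move=> hf.
transitivity (RS (fun t1 t2 => RS (fun r1 r2 => RS (fun s1 s2 =>
    f (S t1 * (r1 * s1)) (s2 * S r2 * S t2))))).
  apply: eq_RS => t1 t2; rewrite (L2' (f := fun p q => f (S t1 * p) (q * S t2))) /=; last by lin_tac.
  by rewrite mulr1 mul1r.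
under eq_RS => t1 t2 do rewrite RS_RS.
rewrite RS_RS.
transitivity (RS (fun s1 s2 => RS (fun t1 t2 => RS (fun r1 r2 =>
   (fun p q => f (p * s1) (s2 * S q)) (S t1 * r1) (t2 * r2))))).
  by do 3 (apply: eq_RS => ? ? /=); rewrite Smul !mulrA.
apply: eq_RS => s1 s2; rewrite (L1 (f := fun p q => f (p * s1) (s2 * S q))); last by lin_tac.
by rewrite /= mul1r S1 mulr1.
Qed.

Definition IntwT (T : forall W : lmodType k, (H -> H -> W) -> W) : Prop :=
  forall (W : lmodType k) (G : H -> H -> H -> W), trilin G ->
   T W (fun y c => DS y (fun b1 b2 => RS (fun s1 s2 => G (b1 * s2) (b2 * s1) c))) =
   T W (fun y c => DS y (fun b1 b2 => RS (fun s1 s2 => G (s2 * b2) (s1 * b1) c))).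

Lemma Intw1 : IntwT (fun W F => RS (fun r1 r2 => F r1 r2)).
Proof.
move=> W G hG; have hG' : trilin (fun x y z => G y x z) by lin_tac.
exact: (R4 hG').
Qed.
Lemma Intw2 : IntwT (fun W F => RS (fun r1 r2 => F r2 r1)).
Proof.
move=> W G hG; have hG' : trilin (fun z x y => G y x z) by lin_tac.
exact: (R3 hG').
Qed.

Lemma IntwS T : IntwT T -> IntwT (fun W F => T W (fun y c => F (S y) c)).
Proof.
move=> hT W G hG /=.
pose G2 := fun p q c => G (S p) (S q) c.
have hG2 : trilin G2 by rewrite /G2; lin_tac.
have eL : (fun y c => DS (S y) (fun b1 b2 => RS (fun s1 s2 => G (b1 * s2) (b2 * s1) c))) =
          (fun y c => DS y (fun b1 b2 => RS (fun s1 s2 => G2 (s2 * b2) (s1 * b1) c))).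
  apply: functional_extensionality => y; apply: functional_extensionality => c.
  rewrite DS_S; last by lin_tac.
  apply: eq_DS => a1 a2 /=.
  rewrite -(SSR (f := fun s1 s2 => G (S a2 * s2) (S a1 * s1) c)); last by lin_tac.
  by apply: eq_RS => s1 s2 /=; rewrite /G2 !Smul.
have eR : (fun y c => DS (S y) (fun b1 b2 => RS (fun s1 s2 => G (s2 * b2) (s1 * b1) c))) =
          (fun y c => DS y (fun b1 b2 => RS (fun s1 s2 => G2 (b1 * s2) (b2 * s1) c))).
  apply: functional_extensionality => y; apply: functional_extensionality => c.
  rewrite DS_S; last by lin_tac.
  apply: eq_DS => a1 a2 /=.
  rewrite -(SSR (f := fun s1 s2 => G (s2 * S a1) (s1 * S a2) c)); last by lin_tac.
  by apply: eq_RS => s1 s2 /=; rewrite /G2 !Smul.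
by rewrite eL eR (hT W G2 hG2).
Qed.

Lemma nu_sum (W : lmodType k) x (f : H -> H -> W) :
  \sum_(p <- nu D S R x) f p.1 p.2 =
  RS (fun r1 r2 => DS x (fun a1 a2 => DS a1 (fun b1 b2 => RS (fun s1 s2 =>
      f (r2 * b2 * s2) (S b1 * S r1 * a2 * s1))))).
Proof.
rewrite /nu big_flatten big_map; apply: eq_bigr => r _.
by rewrite big_allpairs_dep /D3 big_allpairs_dep.
Qed.

Lemma Coinv (T : forall W : lmodType k, (H -> H -> W) -> W) :
 (forall (W : lmodType k) (g : H -> H -> H -> H -> W), quadlin g ->
   T W (fun x c => DS x (fun a1 a2 => DS a2 (fun b1 b2 => RS (fun s1 s2 => g a1 (b1 * s2) (b2 * s1) c)))) =
   T W (fun x c => DS x (fun a1 a2 => RS (fun s1 s2 => DS a2 (fun b1 b2 => g a1 (s2 * b2) (s1 * b1) c))))) ->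
 forall (W : lmodType k) (g : H -> H -> H -> W), trilin g ->
   T W (fun x c => \sum_(p <- nu D S R x) g p.1 p.2 c) = T W (fun x c => g x 1 c).
Proof.
move=> hT W g hg.
pose g' := fun c1 p q c2 => RS (fun r1 r2 => g (r2 * p) (S c1 * S r1 * q) c2).
have hg' : quadlin g' by rewrite /g'; lin_tac.
have eL : (fun x c => \sum_(p <- nu D S R x) g p.1 p.2 c) =
   (fun x c => DS x (fun a1 a2 => DS a2 (fun b1 b2 => RS (fun s1 s2 => g' a1 (b1 * s2) (b2 * s1) c)))).
  apply: functional_extensionality => x; apply: functional_extensionality => c.
  rewrite (nu_sum x (fun p q => g p q c)).
  under eq_RS => r1 r2 do (rewrite DS_co; last by lin_tac).
  rewrite -DS_RS.
  under eq_DS => a1 a2 do rewrite -DS_RS.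
  under eq_DS => a1 a2 do under eq_DS => b1 b2 do rewrite RS_RS.
  apply: eq_DS => a1 a2; apply: eq_DS => b1 b2; apply: eq_RS => s1 s2; apply: eq_RS => r1 r2.
  by rewrite !mulrA.
have eR : (fun x c => DS x (fun a1 a2 => RS (fun s1 s2 => DS a2 (fun b1 b2 => g' a1 (s2 * b2) (s1 * b1) c)))) =
   (fun x c => g x 1 c).
  apply: functional_extensionality => x; apply: functional_extensionality => c.
  transitivity (DS x (fun a1 a2 => DS a2 (fun b1 b2 => g b2 (S a1 * b1) c))).
    apply: eq_DS => a1 a2; rewrite -DS_RS; apply: eq_DS => b1 b2; rewrite /g' RS_RS.
    have hb : bilin (fun p q => g (q * b2) (S a1 * p * b1) c) by lin_tac.
    have := L1 hb; rewrite /= mul1r mulr1 => <-.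
    by apply: eq_RS => ? ? /=; apply: eq_RS => ? ? /=; rewrite !mulrA.
  rewrite -DS_co; last by lin_tac.
  under eq_DS => a1 a2 do (rewrite (DS_ant1 a1 (g := fun t => g a2 t c)); last by lin_tac).
  by rewrite (DS_cu1 x (g := fun t => g t 1 c)) //; lin_tac.
by rewrite eL (hT W g' hg') eR.
Qed.

Section Hyps.
Variable W : lmodType k.
Variable g : H -> H -> H -> H -> W.
Hypothesis hg : quadlin g.

Lemma hyp1 :
  RS (fun r1 r2 => DS r1 (fun a1 a2 => DS a2 (fun b1 b2 => RS (fun s1 s2 => g a1 (b1 * s2) (b2 * s1) r2)))) =
  RS (fun r1 r2 => DS r1 (fun a1 a2 => RS (fun s1 s2 => DS a2 (fun b1 b2 => g a1 (s2 * b2) (s1 * b1) r2)))).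
Proof.
rewrite (R1 (G := fun x y z => DS y (fun b1 b2 => RS (fun s1 s2 => g x (b1 * s2) (b2 * s1) z)))); last by lin_tac.
rewrite (R1 (G := fun x y z => RS (fun s1 s2 => DS y (fun b1 b2 => g x (s2 * b2) (s1 * b1) z)))); last by lin_tac.
apply: eq_RS => r1 r2 /=.
have hG : trilin (fun p q z => g r1 p q (r2 * z)) by lin_tac.
transitivity (RS (fun t1 t2 => DS t1 (fun b1 b2 => RS (fun s1 s2 => g r1 (s2 * b2) (s1 * b1) (r2 * t2))))).
  exact: (Intw1 hG).
by apply: eq_RS => t1 t2; rewrite DS_RS.
Qed.

Lemma hyp1S :
  RS (fun r1 r2 => DS (S r1) (fun a1 a2 => DS a2 (fun b1 b2 => RS (fun s1 s2 => g a1 (b1 * s2) (b2 * s1) r2)))) =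
  RS (fun r1 r2 => DS (S r1) (fun a1 a2 => RS (fun s1 s2 => DS a2 (fun b1 b2 => g a1 (s2 * b2) (s1 * b1) r2)))).
Proof.
under eq_RS => r1 r2 do (rewrite DS_S; last by lin_tac).
under [RHS]eq_RS => r1 r2 do (rewrite DS_S; last by lin_tac).
rewrite (R1 (G := fun x y z => DS (S x) (fun b1 b2 => RS (fun s1 s2 => g (S y) (b1 * s2) (b2 * s1) z)))); last by lin_tac.
rewrite (R1 (G := fun x y z => RS (fun s1 s2 => DS (S x) (fun b1 b2 => g (S y) (s2 * b2) (s1 * b1) z)))); last by lin_tac.
rewrite RS_RS [RHS]RS_RS.
apply: eq_RS => t1 t2 /=.
have hG : trilin (fun p q z => g (S t1) p q (z * t2)) by lin_tac.
transitivity (RS (fun r1 r2 => DS (S r1) (fun b1 b2 => RS (fun s1 s2 => g (S t1) (s2 * b2) (s1 * b1) (r2 * t2))))).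
  exact: (IntwS Intw1 hG).
by apply: eq_RS => r1 r2; rewrite DS_RS.
Qed.

Lemma hyp2 :
  RS (fun r1 r2 => DS r2 (fun a1 a2 => DS a2 (fun b1 b2 => RS (fun s1 s2 => g a1 (b1 * s2) (b2 * s1) r1)))) =
  RS (fun r1 r2 => DS r2 (fun a1 a2 => RS (fun s1 s2 => DS a2 (fun b1 b2 => g a1 (s2 * b2) (s1 * b1) r1)))).
Proof.
rewrite (R2 (G := fun c x y => DS y (fun b1 b2 => RS (fun s1 s2 => g x (b1 * s2) (b2 * s1) c)))); last by lin_tac.
rewrite (R2 (G := fun c x y => RS (fun s1 s2 => DS y (fun b1 b2 => g x (s2 * b2) (s1 * b1) c)))); last by lin_tac.
rewrite RS_RS [RHS]RS_RS.
apply: eq_RS => t1 t2 /=.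
have hG : trilin (fun p q z => g t2 p q (z * t1)) by lin_tac.
transitivity (RS (fun r1 r2 => DS r2 (fun b1 b2 => RS (fun s1 s2 => g t2 (s2 * b2) (s1 * b1) (r1 * t1))))).
  exact: (Intw2 hG).
by apply: eq_RS => r1 r2; rewrite DS_RS.
Qed.

Lemma hyp2S :
  RS (fun r1 r2 => DS (S r2) (fun a1 a2 => DS a2 (fun b1 b2 => RS (fun s1 s2 => g a1 (b1 * s2) (b2 * s1) r1)))) =
  RS (fun r1 r2 => DS (S r2) (fun a1 a2 => RS (fun s1 s2 => DS a2 (fun b1 b2 => g a1 (s2 * b2) (s1 * b1) r1)))).
Proof.
under eq_RS => r1 r2 do (rewrite DS_S; last by lin_tac).
under [RHS]eq_RS => r1 r2 do (rewrite DS_S; last by lin_tac).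
rewrite (R2 (G := fun c x y => DS (S x) (fun b1 b2 => RS (fun s1 s2 => g (S y) (b1 * s2) (b2 * s1) c)))); last by lin_tac.
rewrite (R2 (G := fun c x y => RS (fun s1 s2 => DS (S x) (fun b1 b2 => g (S y) (s2 * b2) (s1 * b1) c)))); last by lin_tac.
apply: eq_RS => r1 r2 /=.
have hG : trilin (fun p q z => g (S r2) p q (r1 * z)) by lin_tac.
transitivity (RS (fun t1 t2 => DS (S t2) (fun b1 b2 => RS (fun s1 s2 => g (S r2) (s2 * b2) (s1 * b1) (r1 * t1))))).
  exact: (IntwS Intw2 hG).
by apply: eq_RS => t1 t2; rewrite DS_RS.
Qed.

Lemma hyp2SS :
  RS (fun r1 r2 => DS (S (S r2)) (fun a1 a2 => DS a2 (fun b1 b2 => RS (fun s1 s2 => g a1 (b1 * s2) (b2 * s1) r1)))) =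
  RS (fun r1 r2 => DS (S (S r2)) (fun a1 a2 => RS (fun s1 s2 => DS a2 (fun b1 b2 => g a1 (s2 * b2) (s1 * b1) r1)))).
Proof.
under eq_RS => r1 r2 do (rewrite DS_S; last by lin_tac).
under eq_RS => r1 r2 do (rewrite DS_S; last by lin_tac).
under [RHS]eq_RS => r1 r2 do (rewrite DS_S; last by lin_tac).
under [RHS]eq_RS => r1 r2 do (rewrite DS_S; last by lin_tac).
rewrite (R2 (G := fun c x y => DS (S (S y)) (fun b1 b2 => RS (fun s1 s2 => g (S (S x)) (b1 * s2) (b2 * s1) c)))); last by lin_tac.
rewrite (R2 (G := fun c x y => RS (fun s1 s2 => DS (S (S y)) (fun b1 b2 => g (S (S x)) (s2 * b2) (s1 * b1) c)))); last by lin_tac.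
rewrite RS_RS [RHS]RS_RS.
apply: eq_RS => t1 t2 /=.
have hG : trilin (fun p q z => g (S (S t2)) p q (z * t1)) by lin_tac.
transitivity (RS (fun r1 r2 => DS (S (S r2)) (fun b1 b2 => RS (fun s1 s2 => g (S (S t2)) (s2 * b2) (s1 * b1) (r1 * t1))))).
  exact: (IntwS (IntwS Intw2) hG).
by apply: eq_RS => r1 r2; rewrite DS_RS.
Qed.
End Hyps.

Lemma lin_ext (V W : lmodType k) (g g' : V -> W) : (forall x, g' x = g x) -> lin g -> lin g'.
Proof. by move=> e hg a x y; rewrite !e hg. Qed.

Lemma nu_lin (W : lmodType k) (f : H -> H -> W) : bilin f ->
  lin (fun x => \sum_(p <- nu D S R x) f p.1 p.2).
Proof.
move=> hf; eapply lin_ext; first by move=> x; apply: nu_sum.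
lin_tac.
Qed.

Lemma cent (W : lmodType k) (f : H -> H -> W) x P Q T : bilin f ->
  \sum_(p <- nu D S R x) f (p.1 * P) (Q * p.2 * T) =
  \sum_(p <- nu D S R x) f (p.1 * P) (p.2 * Q * T).
Proof.
move=> hf; case: (h5 x) => t' [ht hc].
have hb1 : bilin (fun a b => f (a * P) (Q * b * T)) by lin_tac.
have hb2 : bilin (fun a b => f (a * P) (b * Q * T)) by lin_tac.
rewrite (ht _ _ hb1) (ht _ _ hb2); apply: eq_big_seq => p hp.
by rewrite hc.
Qed.

Lemma cent2 (W : lmodType k) (f : H -> H -> W) x P Q V A B : bilin f ->
  \sum_(p <- nu D S R x) f (p.1 * P) (p.2 * (Q * V * A * B)) =
  \sum_(p <- nu D S R x) f (p.1 * P) (Q * p.2 * (V * A * B)).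
Proof.
move=> hf; rewrite cent //; apply: eq_bigr => p _.
by rewrite !mulrA.
Qed.

Lemma ins (W : lmodType k) (f : H -> H -> W) X Y A B C E : bilin f ->
  X = A * B -> Y = C * E ->
  f X Y = RS (fun t1 t2 => RS (fun v1 v2 => f (A * (t2 * v2) * B) (C * (t1 * S v1) * E))).
Proof.
move=> hf -> ->.
have hb : bilin (fun p q => f (A * q * B) (C * p * E)) by lin_tac.
by have := L1' hb; rewrite /= !mulr1 => ->.
Qed.

Lemma numult (W : lmodType k) (f : H -> H -> W) x y : bilin f ->
  \sum_(p <- nu D S R (x * y)) f p.1 p.2 =
  \sum_(p <- nu D S R x) \sum_(q <- nu D S R y) f (p.1 * q.1) (p.2 * q.2).
Proof.
move=> hf; symmetry.
rewrite exchange_big /=.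
rewrite (nu_sum y (fun q1 q2 => \sum_(p <- nu D S R x) f (p.1 * q1) (p.2 * q2))).
under eq_RS => v1 v2 do under eq_DS => a1 a2 do under eq_DS => b1 b2 do under eq_RS => s1 s2 do
  (rewrite cent2 // (nu_sum x (fun p1 p2 => f (p1 * (v2 * b2 * s2)) (S b1 * p2 * (S v1 * a2 * s1))))).
symmetry.
rewrite nu_sum.
under eq_RS => r1 r2 do (rewrite (DS_mul x y (F := fun A1 A2 => DS A1 (fun B1 B2 => RS (fun s1 s2 =>
   f (r2 * B2 * s2) (S B1 * S r1 * A2 * s1))))); last by lin_tac).
under eq_RS => r1 r2 do under eq_DS => a1 a2 do under eq_DS => c1 c2 do (rewrite DS_mul; last by lin_tac).
under eq_RS => r1 r2 do under eq_DS => a1 a2 do under eq_DS => c1 c2 do under eq_DS => b1 b2 do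
  under eq_DS => d1 d2 do under eq_RS => s1 s2 do
  (rewrite Smul (ins _ (A := r2 * b2) (B := d2 * s2) (C := S d1 * S b1 * S r1 * a2) (E := c2 * s1)) //;
   try by rewrite !mulrA).
under eq_RS => ? ? do under eq_DS => ? ? do under eq_DS => ? ? do under eq_DS => ? ? do under eq_DS => ? ? do under eq_RS => ? ? do rewrite RS_RS.
under eq_RS => ? ? do under eq_DS => ? ? do under eq_DS => ? ? do under eq_DS => ? ? do under eq_DS => ? ? do rewrite RS_RS.
under eq_RS => ? ? do under eq_DS => ? ? do under eq_DS => ? ? do under eq_DS => ? ? do rewrite DS_RS.
under eq_RS => ? ? do under eq_DS => ? ? do under eq_DS => ? ? do rewrite DS_RS.
under eq_RS => ? ? do under eq_DS => ? ? do rewrite DS_RS.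
under eq_RS => ? ? do rewrite DS_RS.
rewrite RS_RS.
under eq_RS => ? ? do under eq_RS => ? ? do rewrite DS_DS.
under eq_RS => ? ? do rewrite -DS_RS.
under eq_RS => ? ? do under eq_DS => ? ? do under eq_RS => ? ? do under eq_DS => ? ? do rewrite DS_DS.
under eq_RS => ? ? do under eq_DS => ? ? do under eq_RS => ? ? do rewrite DS_DS.
under eq_RS => ? ? do under eq_DS => ? ? do rewrite -DS_RS.
under eq_RS => ? ? do under eq_DS => ? ? do under eq_DS => ? ? do under eq_RS => ? ? do under eq_DS => ? ? do rewrite DS_RS.
under eq_RS => ? ? do under eq_DS => ? ? do under eq_DS => ? ? do under eq_RS => ? ? do rewrite DS_RS.
under eq_RS => ? ? do under eq_DS => ? ? do under eq_DS => ? ? do rewrite RS_RS.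
by repeat (first [apply: eq_RS => ? ? /= | apply: eq_DS => ? ? /=]); rewrite !mulrA.
Qed.


Lemma lin_nuc (W : lmodType k) (F : H * H -> W) (phi : H -> H) :
  bilin (fun a b => F (a, b)) -> lin phi -> lin (fun x => \sum_(p <- nu D S R (phi x)) F p).
Proof.
move=> hF hp a x y.
have e : forall z, \sum_(p <- nu D S R z) F p = \sum_(p <- nu D S R z) F (p.1, p.2).
  by move=> z; apply: eq_bigr => -[].
by rewrite !e hp (nu_lin hF).
Qed.

Ltac lin_step2 := match goal with
 | |- lin (fun _ => \sum_(_ <- nu D S R _) _) => apply: lin_nuc
 | _ => lin_step
 end.
Ltac lin_tac2 := repeat lin_step2.

Definition uu := RS (fun a b => S b * a).

Section Main.
Variable W : lmodType k.
Variable f : H -> H -> W.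
Hypothesis hf : bilin f.

Let C1 := Coinv (T := fun W F => RS (fun r1 r2 => F r1 r2)) (@hyp1).
Let C1S := Coinv (T := fun W F => RS (fun r1 r2 => F (S r1) r2)) (@hyp1S).
Let C2S := Coinv (T := fun W F => RS (fun r1 r2 => F (S r2) r1)) (@hyp2S).
Let C2SS := Coinv (T := fun W F => RS (fun r1 r2 => F (S (S r2)) r1)) (@hyp2SS).

Lemma main_a : \sum_(p <- nu D S R uu) f p.1 p.2 = f uu 1.
Proof.
rewrite /uu -(RS_in (g := fun h => \sum_(p <- nu D S R h) f p.1 p.2)); last exact: nu_lin.
under eq_RS => r1 r2 do rewrite numult // exchange_big /=.
rewrite (C1 (g := fun q1 q2 c => \sum_(p <- nu D S R (S c)) f (p.1 * q1) (p.2 * q2))) /=; last by lin_tac2.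
rewrite (C2S (g := fun p1 p2 c => f (p1 * c) (p2 * 1))) /=; last by lin_tac2.
by rewrite mulr1 (RS_in (g := fun t => f t 1)) //; lin_tac.
Qed.

Lemma main_b : \sum_(p <- nu D S R (S uu)) f p.1 p.2 = f (S uu) 1.
Proof.
rewrite /uu -(RS_in (g := S)); last by lin_tac.
under eq_RS => r1 r2 do rewrite Smul.
rewrite -(RS_in (g := fun h => \sum_(p <- nu D S R h) f p.1 p.2)); last exact: nu_lin.
under eq_RS => r1 r2 do rewrite numult //.
rewrite (C1S (g := fun p1 p2 c => \sum_(q <- nu D S R (S (S c))) f (p1 * q.1) (p2 * q.2))) /=; last by lin_tac2.
rewrite (C2SS (g := fun q1 q2 c => f (S c * q1) (1 * q2))) /=; last by lin_tac2.
by rewrite mulr1 (RS_in (g := fun t => f t 1)) //; lin_tac.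
Qed.
End Main.

Lemma main_c (W : lmodType k) (f : H -> H -> W) : bilin f ->
  \sum_(p <- nu D S R (uu * S uu)) f p.1 p.2 = f (uu * S uu) 1.
Proof.
move=> hf; rewrite numult //.
have hb1 : bilin (fun a b => \sum_(q <- nu D S R (S uu)) f (a * q.1) (b * q.2)) by lin_tac2.
transitivity (\sum_(q <- nu D S R (S uu)) f (uu * q.1) (1 * q.2)); first exact: (main_a hb1).
have hb2 : bilin (fun a b => f (uu * a) (1 * b)) by lin_tac2.
by rewrite (main_b hb2) mulr1.
Qed.

Lemma final : let u := drinfeld_u S R in
  teq2 (nu D S R u) [:: (u, 1)] /\
  teq2 (nu D S R (S u)) [:: (S u, 1)] /\
  teq2 (nu D S R (u * S u)) [:: (u * S u, 1)].
Proof.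
rewrite /=; have -> : drinfeld_u S R = uu by [].
split; [|split] => W f hf; rewrite big_seq1 /=; [exact: main_a | exact: main_b | exact: main_c].
Qed.
End Hopf.

Unset Implicit Arguments.

Theorem proposition3p4 (k : fieldType) (H : algType k)
  (D : H -> seq (H * H)) (eps : H -> k) (S : H -> H) (R : seq (H * H)) :
  semiquasitriangular D eps S R ->
  let u := drinfeld_u S R in
  teq2 (nu D S R u) [:: (u, 1)] /\
  teq2 (nu D S R (S u)) [:: (S u, 1)] /\
  teq2 (nu D S R (u * S u)) [:: (u * S u, 1)].
Proof.
move=> [[hDl [hDm [hD1 [hco [hel [hem [he1 [hcu1 [hcu2 [hSl [hant1 hant2]]]]]]]]]]]
        [_ [hRinv [h1 [h2 [h3 [h4 [h5 _]]]]]]]].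
by apply: final.
Qed.
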